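(* Let $\varphi\in\Phi$ be such that $\mathscr{L}_{\varphi}\neq\emptyset$. Then $\mathscr{L}_{\varphi}$ is uncountable. Moreover, for every non-empty open interval $J\subseteq\mathbb{R}$, the set $\mathscr{L}_{\varphi}^{\ast}\cap J$ is uncountable.
   Context: $\mathscr{L}$ is the set of Liouville numbers (real irrational $\zeta$ such that for every $\eta>0$ there are infinitely many rationals $y/x$, $x\geq1$, with $|\zeta-y/x|\leq x^{-\eta}$). For real $\alpha$, $\Vert\alpha\Vert$ is the distance from $\alpha$ to the nearest integer. $\Phi$ is the set of all non-decreasing functions $\varphi:\mathbb{R}_{\geq 2}\to\mathbb{R}_{\geq 2}$ with $\lim_{x\to\infty}\varphi(x)=\infty$. For $\varphi\in\Phi$, $\mathscr{L}_{\varphi}$ is the set of $\zeta\in\mathscr{L}$ such that for every positive integer $N$ there is an integer $q$ with $2\leq q\leq\varphi(N)$ and $-\log\Vert\zeta q\Vert/\log q\geq N$; $\mathscr{L}_{\varphi}^{\ast}\supseteq\mathscr{L}_{\varphi}$ is the set of $\zeta\in\mathscr{L}$ for which this condition holds for all $N\geq N_0(\zeta)$ (some $N_0$ depending on $\zeta$). *)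

(* Defs.v *)
From Stdlib Require Import Reals List.
From Coquelicot Require Import Rbar.
Open Scope R_scope.

Definition dist_nearest_int (a : R) : R :=
  Rmin (a - IZR (Int_part a)) (IZR (Int_part a) + 1 - a).

Definition infinite_set (S : R -> Prop) : Prop :=
  forall l : list R, exists r, S r /\ ~ In r l.

Definition irrational (z : R) : Prop :=
  forall (p : Z) (q : Z), q <> 0%Z -> z <> IZR p / IZR q.

Definition Liouville (z : R) : Prop :=
  irrational z /\
  forall eta : R, 0 < eta ->
    infinite_set (fun r => exists (y : Z) (x : nat), (1 <= x)%nat /\
       r = IZR y / INR x /\ Rabs (z - IZR y / INR x) <= Rpower (INR x) (- eta)).

(* The class Phi: non-decreasing phi : R_{>=2} -> R_{>=2} tending to infinity
   (modelled as a total function R -> R, constrained on [2, +oo)). *)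
Definition in_Phi (phi : R -> R) : Prop :=
  (forall x, 2 <= x -> 2 <= phi x) /\
  (forall x y, 2 <= x -> x <= y -> phi x <= phi y) /\
  (forall M : R, exists x0, 2 <= x0 /\ forall x, x0 <= x -> M <= phi x).

Definition good_at (phi : R -> R) (z : R) (N : nat) : Prop :=
  exists q : nat, (2 <= q)%nat /\ INR q <= phi (INR N) /\
    - ln (dist_nearest_int (z * INR q)) / ln (INR q) >= INR N.

Definition L_phi (phi : R -> R) (z : R) : Prop :=
  Liouville z /\ forall N : nat, (1 <= N)%nat -> good_at phi z N.

Definition L_phi_star (phi : R -> R) (z : R) : Prop :=
  Liouville z /\ exists N0 : nat, forall N : nat, (1 <= N)%nat -> (N0 <= N)%nat ->
    good_at phi z N.

Definition uncountable (S : R -> Prop) : Prop :=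
  ~ exists f : R -> nat, forall x y, S x -> S y -> f x = f y -> x = y.

(* Main.v *)
Require Import Defs.
From Stdlib Require Import Reals Lra Lia ZArith List Classical ClassicalEpsilon FunctionalExtensionality.
From Coquelicot Require Import Rbar.
Open Scope R_scope.

Lemma Int_part_eq a p : IZR p <= a < IZR p + 1 -> Int_part a = p.
Proof.
  intros [H1 H2]. unfold Int_part.
  assert (E : (p + 1)%Z = up a).
  { apply tech_up; rewrite plus_IZR; simpl; lra. }
  rewrite <- E. lia.
Qed.

Lemma dist_nonneg a : 0 <= dist_nearest_int a.
Proof.
  destruct (base_Int_part a) as [H1 H2]. unfold dist_nearest_int.
  apply Rmin_glb; lra.
Qed.

Lemma dist_le a p : dist_nearest_int a <= Rabs (a - IZR p).
Proof.
  destruct (base_Int_part a) as [H1 H2]. unfold dist_nearest_int.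
  set (f := Int_part a) in *.
  destruct (Z_le_gt_dec p f) as [Hp|Hp].
  - apply IZR_le in Hp. eapply Rle_trans. apply Rmin_l.
    rewrite Rabs_right; lra.
  - assert (Hp' : (f + 1 <= p)%Z) by lia. apply IZR_le in Hp'.
    rewrite plus_IZR in Hp'. simpl in Hp'.
    eapply Rle_trans. apply Rmin_r.
    rewrite Rabs_left1; lra.
Qed.

Lemma dist_attained a : exists p, Rabs (a - IZR p) = dist_nearest_int a.
Proof.
  destruct (base_Int_part a) as [H1 H2]. unfold dist_nearest_int.
  set (f := Int_part a) in *.
  destruct (Rle_dec (a - IZR f) (IZR f + 1 - a)).
  - exists f. rewrite Rmin_left by lra. rewrite Rabs_right; lra.
  - exists (f+1)%Z. rewrite Rmin_right by lra. rewrite plus_IZR. simpl.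
    rewrite Rabs_left1; lra.
Qed.

Lemma dist_pos a : (forall p, a <> IZR p) -> 0 < dist_nearest_int a.
Proof.
  intros H. destruct (base_Int_part a) as [H1 H2]. unfold dist_nearest_int.
  set (f := Int_part a) in *.
  assert (IZR f <> a) by (intro E; apply (H f); auto).
  apply Rmin_glb_lt; lra.
Qed.

Lemma dist_between a p : IZR p < a < IZR p + 1 -> 0 < dist_nearest_int a /\ dist_nearest_int a <= a - IZR p.
Proof.
  intros [H1 H2]. split.
  - apply dist_pos. intros p' E. subst a.
    destruct (Z_le_gt_dec p' p) as [Hp|Hp].
    + apply IZR_le in Hp. lra.
    + assert (Hp' : (p + 1 <= p')%Z) by lia. apply IZR_le in Hp'.
      rewrite plus_IZR in Hp'. simpl in Hp'. lra.
  - eapply Rle_trans. apply (dist_le a p). rewrite Rabs_right; lra.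
Qed.

Lemma good_of_bound phi z N q : (2 <= q)%nat -> INR q <= phi (INR N) ->
  0 < dist_nearest_int (z * INR q) -> dist_nearest_int (z * INR q) <= / INR q ^ N ->
  good_at phi z N.
Proof.
  intros Hq Hphi Hd Hb. exists q. split; [|split]; auto.
  assert (Hq2 : 2 <= INR q) by (apply (le_INR 2); auto).
  assert (Hlq : 0 < ln (INR q)).
  { rewrite <- ln_1. apply ln_increasing; lra. }
  assert (Hpow : 0 < INR q ^ N) by (apply pow_lt; lra).
  assert (Hln : ln (dist_nearest_int (z * INR q)) <= - (INR N * ln (INR q))).
  { rewrite <- ln_pow by lra. rewrite <- ln_Rinv by lra.
    destruct (Rle_lt_or_eq_dec _ _ Hb) as [Hl|Hl].
    - left. apply ln_increasing; auto.
    - rewrite Hl. lra. }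
  apply Rle_ge. unfold Rdiv.
  apply Rmult_le_reg_r with (ln (INR q)); auto.
  rewrite Rmult_assoc, Rinv_l by lra. lra.
Qed.

Lemma bound_of_good phi z N : good_at phi z N ->
  exists q, (2 <= q)%nat /\ INR q <= phi (INR N) /\
    exists p, Rabs (z * INR q - IZR p) <= / INR q ^ N.
Proof.
  intros [q [Hq [Hphi Hg]]]. exists q. split; [|split]; auto.
  destruct (dist_attained (z * INR q)) as [p Hp]. exists p. rewrite Hp.
  assert (Hq2 : 2 <= INR q) by (apply (le_INR 2); auto).
  assert (Hlq : 0 < ln (INR q)).
  { rewrite <- ln_1. apply ln_increasing; lra. }
  assert (Hpow : 0 < INR q ^ N) by (apply pow_lt; lra).
  set (d := dist_nearest_int (z * INR q)) in *.
  destruct (dist_nonneg (z * INR q)) as [Hd|Hd]; fold d in Hd.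
  - assert (H1 : INR N <= - ln d / ln (INR q)) by lra.
    assert (H2 : INR N * ln (INR q) <= - ln d).
    { unfold Rdiv in H1. apply Rmult_le_compat_r with (r := ln (INR q)) in H1; [|lra].
      rewrite Rmult_assoc, Rinv_l in H1 by lra. lra. }
    destruct (Rle_or_lt d (/ INR q ^ N)) as [|Hlt]; auto.
    exfalso. apply ln_increasing in Hlt; [|apply Rinv_0_lt_compat; auto].
    rewrite ln_Rinv, ln_pow in Hlt by lra. lra.
  - rewrite <- Hd. left. apply Rinv_0_lt_compat; auto.
Qed.

Lemma my_choice {A B : Type} (P : A -> B -> Prop) :
  (forall a, exists b, P a b) -> exists f : A -> B, forall a, P a (f a).
Proof.
  intros H. exists (fun a => proj1_sig (constructive_indefinite_description _ (H a))).
  intros a. exact (proj2_sig (constructive_indefinite_description _ (H a))).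
Qed.

Lemma INR_lt_pow2 n : INR n < 2 ^ n.
Proof.
  induction n. simpl; lra. rewrite S_INR. simpl.
  assert (1 <= 2 ^ n) by (apply pow_R1_Rle; lra). lra.
Qed.

Lemma small_pow2 eps : 0 < eps -> exists n, / 2 ^ n < eps.
Proof.
  intros He. destruct (archimed (/ eps)) as [H1 _].
  exists (Z.to_nat (up (/ eps))).
  assert (Hp : 0 < / eps) by (apply Rinv_0_lt_compat; auto).
  assert (H3 : / eps < 2 ^ Z.to_nat (up (/ eps))).
  { eapply Rlt_trans; [|apply INR_lt_pow2]. rewrite INR_IZR_INZ.
    rewrite Z2Nat.id. lra. apply le_IZR. lra. }
  assert (H4 : / 2 ^ Z.to_nat (up (/ eps)) < / / eps).
  { apply Rinv_lt_contravar; auto. apply Rmult_lt_0_compat; auto. apply pow_lt; lra. }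
  rewrite Rinv_inv in H4. exact H4.
Qed.

Lemma inv_pow_le q m n : 1 <= q -> (m <= n)%nat -> / q ^ n <= / q ^ m.
Proof.
  intros Hq Hmn. apply Rinv_le_contravar. apply pow_lt; lra. apply Rle_pow; auto.
Qed.

Lemma irr_not_frac z (q : nat) (p : Z) : irrational z -> (1 <= q)%nat -> z * INR q <> IZR p.
Proof.
  intros Hi Hq E. apply (Hi p (Z.of_nat q)). lia.
  rewrite <- INR_IZR_INZ. rewrite <- E. field.
  apply not_0_INR. lia.
Qed.

Section Growth.
Variable phi : R -> R.
Variable z : R.
Hypothesis Hirr : irrational z.
Variables (qf : nat -> nat) (pf : nat -> Z).
Hypothesis Hq : forall N, (1 <= N)%nat -> (2 <= qf N)%nat /\ INR (qf N) <= phi (INR N) /\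
   Rabs (z * INR (qf N) - IZR (pf N)) <= / INR (qf N) ^ N.

Lemma G1 q0 : (1 <= q0)%nat -> exists L0, forall L, (L0 <= L)%nat -> (1 <= L)%nat -> qf L <> q0.
Proof.
  intros Hq0. set (c := dist_nearest_int (z * INR q0)).
  assert (Hc : 0 < c) by (apply dist_pos; intros p; apply irr_not_frac; auto).
  destruct (small_pow2 c Hc) as [n Hn]. exists n. intros L HL HL1 E.
  destruct (Hq L HL1) as [H2 [_ H3]]. rewrite E in H2, H3.
  pose proof (dist_le (z * INR q0) (pf L)). fold c in H.
  assert (Hq2 : 2 <= INR q0) by (apply (le_INR 2); auto).
  assert (/ INR q0 ^ L <= / 2 ^ L).
  { apply Rinv_le_contravar. apply pow_lt; lra. apply pow_incr; lra. }
  pose proof (inv_pow_le 2 n L ltac:(lra) HL). lra.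
Qed.

Lemma G1' D : exists L0, forall L, (L0 <= L)%nat -> (1 <= L)%nat -> (D < qf L)%nat.
Proof.
  induction D.
  - exists 0%nat. intros L _ HL. destruct (Hq L HL). lia.
  - destruct IHD as [L1 H1]. destruct (G1 (S D)) as [L2 H2]. lia.
    exists (max L1 L2). intros L HL HL1.
    specialize (H1 L ltac:(lia) HL1). specialize (H2 L ltac:(lia) HL1). lia.
Qed.

Lemma G2 L2 : exists L, (L2 <= L)%nat /\ (1 <= L)%nat /\
   (pf L * Z.of_nat (qf (S L)) <> pf (S L) * Z.of_nat (qf L))%Z.
Proof.
  apply NNPP. intros Hn.
  assert (H : forall L, (L2 <= L)%nat -> (1 <= L)%nat ->
     (pf L * Z.of_nat (qf (S L)) = pf (S L) * Z.of_nat (qf L))%Z).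
  { intros L a b. apply NNPP. intros c. apply Hn. exists L. auto. }
  set (L3 := max L2 1).
  set (f := IZR (pf L3) / INR (qf L3)).
  assert (Hf : forall n, IZR (pf (n + L3)) / INR (qf (n + L3)) = f).
  { induction n. reflexivity.
    rewrite <- IHn. simpl.
    specialize (H (n + L3)%nat ltac:(lia) ltac:(lia)).
    destruct (Hq (n + L3)%nat ltac:(lia)) as [Ha _].
    destruct (Hq (S (n + L3))%nat ltac:(lia)) as [Hb _].
    apply (le_INR 2) in Ha. apply (le_INR 2) in Hb.
    apply (f_equal IZR) in H. rewrite !mult_IZR, <- !INR_IZR_INZ in H.
    simpl in Ha, Hb.
    field_simplify_eq; try lra. }
  assert (Hz : forall n, Rabs (z - f) <= / 2 ^ (n + L3)).
  { intros n. rewrite <- (Hf n).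
    set (L := (n + L3)%nat).
    destruct (Hq L ltac:(unfold L; lia)) as [Ha [_ Hb]].
    apply (le_INR 2) in Ha. simpl in Ha.
    assert (E : z - IZR (pf L) / INR (qf L) = (z * INR (qf L) - IZR (pf L)) * / INR (qf L))
      by (field; lra).
    rewrite E, Rabs_mult, (Rabs_right (/ _)) by (left; apply Rinv_0_lt_compat; lra).
    assert (/ INR (qf L) ^ L <= / 2 ^ L).
    { apply Rinv_le_contravar. apply pow_lt; lra. apply pow_incr; lra. }
    assert (/ INR (qf L) <= 1) by (rewrite <- Rinv_1; apply Rinv_le_contravar; lra).
    assert (0 <= Rabs (z * INR (qf L) - IZR (pf L))) by apply Rabs_pos.
    nra. }
  destruct (Req_dec z f) as [E|E].
  - destruct (Hq L3 ltac:(unfold L3; lia)) as [Ha _].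
    apply (irr_not_frac z (qf L3) (pf L3) Hirr ltac:(lia)).
    rewrite E. unfold f. field. apply (le_INR 2) in Ha. simpl in Ha. lra.
  - assert (Hp : 0 < Rabs (z - f)) by (apply Rabs_pos_lt; lra).
    destruct (small_pow2 _ Hp) as [n Hn2].
    specialize (Hz n). pose proof (inv_pow_le 2 n (n + L3) ltac:(lra) ltac:(lia)). lra.
Qed.

Lemma G3 D : (1 <= D)%nat -> forall L2, exists L, (L2 <= L)%nat /\ (1 <= L)%nat /\
   INR D ^ L <= 2 * INR D * phi (INR L).
Proof.
  intros HD L2. destruct (G1' D) as [L0 H0].
  destruct (G2 (max L2 L0)) as [L [HL [HL1 Hne]]].
  destruct (Hq L HL1) as [Hb2 [Hbphi Hb]].
  destruct (Hq (S L) ltac:(lia)) as [Hd2 [Hdphi Hd]].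
  pose proof (H0 L ltac:(lia) HL1) as HbD.
  pose proof (H0 (S L) ltac:(lia) ltac:(lia)) as HdD.
  set (b := INR (qf L)) in *. set (d := INR (qf (S L))) in *.
  set (a := IZR (pf L)) in *. set (c := IZR (pf (S L))) in *.
  assert (HbD' : INR D <= b) by (apply le_INR; lia).
  assert (HdD' : INR D <= d) by (apply le_INR; lia).
  assert (HD1 : 1 <= INR D) by (apply (le_INR 1); auto).
  assert (Hb2' : 2 <= b) by (unfold b; apply (le_INR 2); auto).
  assert (Hd2' : 2 <= d) by (unfold d; apply (le_INR 2); auto).
  assert (Hone : 1 <= Rabs (a * d - c * b)).
  { unfold a, b, c, d. rewrite !INR_IZR_INZ, <- !mult_IZR, <- minus_IZR, <- abs_IZR.
    apply IZR_le. lia. }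
  assert (E : a * d - c * b = - d * (z * b - a) + b * (z * d - c)) by ring.
  rewrite E in Hone.
  assert (Hb0 : 0 < b ^ L) by (apply pow_lt; lra).
  assert (Hd0 : 0 < d ^ S L) by (apply pow_lt; lra).
  set (x := Rabs (z * b - a)) in *. set (y := Rabs (z * d - c)) in *.
  assert (Hx : x * b ^ L <= 1).
  { apply Rmult_le_compat_r with (r := b ^ L) in Hb; [|lra].
    rewrite Rinv_l in Hb by lra. auto. }
  assert (Hy : y * d ^ S L <= 1).
  { apply Rmult_le_compat_r with (r := d ^ S L) in Hd; [|lra].
    rewrite Rinv_l in Hd by lra. auto. }
  assert (Hone' : 1 <= d * x + b * y).
  { eapply Rle_trans. apply Hone. eapply Rle_trans. apply Rabs_triang.
    rewrite !Rabs_mult, Rabs_Ropp. rewrite (Rabs_right d), (Rabs_right b) by lra. fold x y. lra. }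
  assert (HxP : 0 <= x) by apply Rabs_pos. assert (HyP : 0 <= y) by apply Rabs_pos.
  assert (HDL : INR D ^ L <= b ^ L) by (apply pow_incr; lra).
  assert (HDL' : INR D ^ S L <= d ^ S L) by (apply pow_incr; lra).
  assert (HD0 : 0 < INR D ^ L) by (apply pow_lt; lra).
  destruct (Rle_or_lt (1/2) (d * x)) as [C|C].
  - exists (S L). split; [lia|split; [lia|]].
    assert (H1 : d * (x * b ^ L) <= d) by (rewrite <- (Rmult_1_r d) at 2; apply Rmult_le_compat_l; lra).
    assert (H2 : 1/2 * b ^ L <= (d * x) * b ^ L) by (apply Rmult_le_compat_r; lra).
    assert (H3 : INR D ^ L <= 2 * phi (INR (S L))) by lra.
    rewrite <- tech_pow_Rmult. assert (0 <= INR D * (2 * phi (INR (S L)) - INR D ^ L)) by (apply Rmult_le_pos; lra).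
    lra.
  - exists L. split; [lia|split; [lia|]].
    assert (Hby : 1/2 <= b * y) by lra.
    assert (H1 : b * (y * d ^ S L) <= b) by (rewrite <- (Rmult_1_r b) at 2; apply Rmult_le_compat_l; lra).
    assert (H2 : 1/2 * d ^ S L <= (b * y) * d ^ S L) by (apply Rmult_le_compat_r; lra).
    assert (H3 : INR D ^ L <= INR D ^ S L) by (apply Rle_pow; auto).
    assert (H4 : INR D ^ L <= 2 * phi (INR L)) by lra.
    assert (H5 : 0 <= phi (INR L)) by lra.
    assert (H6 : 2 * phi (INR L) <= 2 * INR D * phi (INR L)) by nra.
    lra.
Qed.

Lemma G4 d j : (2 <= d)%nat -> exists L, (j < L)%nat /\ INR d * (2 * INR d ^ L + 1) <= phi (INR L).
Proof.
  intros Hd. destruct (G3 (4 * d * d) ltac:(lia) (j + 3)) as [L [HL [HL1 HG]]].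
  exists L. split; [lia|].
  rewrite !mult_INR in HG. set (x := INR d) in *.
  replace (INR 4) with 4 in HG by (simpl; lra).
  assert (Hx : 2 <= x) by (unfold x; apply (le_INR 2); auto).
  replace L with (L - 3 + 3)%nat in HG |- * by lia.
  set (m := (L - 3)%nat) in *.
  set (p := phi (INR (m + 3))) in *.
  rewrite !pow_add in HG |- *.
  assert (Hu : x ^ m <= (4 * x * x) ^ m) by (apply pow_incr; nra).
  assert (Hu1 : 1 <= x ^ m) by (apply pow_R1_Rle; lra).
  set (u := x ^ m) in *. set (w := (4 * x * x) ^ m) in *.
  assert (E1 : (4 * x * x) ^ 3 = 64 * (x * x * x * x * x * x)) by (simpl; ring).
  assert (E2 : x ^ 3 = x * x * x) by (simpl; ring).
  rewrite E1 in HG. rewrite E2.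
  assert (Hx6 : 0 <= x * x * x * x * x * x) by (repeat apply Rmult_le_pos; lra).
  assert (HG2 : u * (64 * (x * x * x * x * x * x)) <= 2 * (4 * x * x) * p).
  { eapply Rle_trans; [|apply HG]. apply Rmult_le_compat_r; lra. }
  assert (HG3 : (8 * (x * x)) * (8 * (u * (x * x * x * x))) <= (8 * (x * x)) * p).
  { replace ((8 * (x * x)) * (8 * (u * (x * x * x * x)))) with (u * (64 * (x * x * x * x * x * x))) by ring.
    replace (8 * (x * x) * p) with (2 * (4 * x * x) * p) by ring. lra. }
  apply Rmult_le_reg_l in HG3; [|nra].
  assert (Hx3 : 1 <= x * x * x) by nra.
  assert (Hv : 1 <= u * (x * x * x)).
  { assert (0 <= (u - 1) * (x * x * x - 1)) by (apply Rmult_le_pos; lra). nra. }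
  assert (Hux : x <= u * (x * x * x) * x).
  { assert (0 <= (u * (x * x * x) - 1) * x) by (apply Rmult_le_pos; lra). nra. }
  replace (x * (2 * (u * (x * x * x)) + 1)) with (2 * (u * (x * x * x) * x) + x) by ring.
  replace (u * (x * x * x * x)) with (u * (x * x * x) * x) in HG3 by ring.
  lra.
Qed.

End Growth.

Definition stp (g : nat -> nat -> nat) (x : nat * nat * Z) (b : bool) : nat * nat * Z :=
  let '(D, J, A) := x in
  let J' := g D J in
  let M := (2 * D ^ J' + (if b then 1 else 0))%nat in
  ((D * M)%nat, J', (A * Z.of_nat M + 1)%Z).

Fixpoint st g (x0 : nat * nat * Z) (s : nat -> bool) (k : nat) : nat * nat * Z :=
  match k with 0%nat => x0 | S k => stp g (st g x0 s k) (s k) end.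

Definition DD g x0 s k := fst (fst (st g x0 s k)).
Definition JJ g x0 s k := snd (fst (st g x0 s k)).
Definition AA g x0 s k := snd (st g x0 s k).
Definition MM g x0 s k := (2 * DD g x0 s k ^ JJ g x0 s (S k) + (if s k then 1 else 0))%nat.
Definition SS g x0 s k := IZR (AA g x0 s k) / INR (DD g x0 s k).

Lemma nat_pow_ge1 d j : (1 <= d)%nat -> (1 <= d ^ j)%nat.
Proof. intros H. induction j; simpl; nia. Qed.

Lemma list_avoid (u : nat -> R) : (forall i j, u i = u j -> i = j) ->
  forall l K, exists k, (K <= k)%nat /\ ~ In (u k) l.
Proof.
  intros Hu l. induction l as [|x l IH]; intros K.
  - exists K. split; auto.
  - destruct (IH K) as [k [Hk Hn]].
    destruct (Req_dec (u k) x) as [E|E].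
    + destruct (IH (S k)) as [k' [Hk' Hn']]. exists k'. split. lia.
      intros [E'|E']; auto. rewrite <- E in E'. apply Hu in E'. lia.
    + exists k. split; auto. intros [E'|E']; auto.
Qed.

Lemma IZR_abs_lt1 n : Rabs (IZR n) < 1 -> n = 0%Z.
Proof. intros H. rewrite <- abs_IZR in H. apply lt_IZR in H. lia. Qed.

Section Cons.
Variable g : nat -> nat -> nat.
Hypothesis Hgj : forall d j, (2 <= d)%nat -> (j < g d j)%nat.
Variable x0 : nat * nat * Z.
Hypothesis HD0 : (2 <= fst (fst x0))%nat.
Variable s : nat -> bool.

Notation D := (DD g x0 s).
Notation J := (JJ g x0 s).
Notation A := (AA g x0 s).
Notation M := (MM g x0 s).
Notation S_ := (SS g x0 s).

Lemma DD_S k : D (S k) = (D k * M k)%nat.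
Proof. unfold MM, DD, JJ. simpl. destruct (st g x0 s k) as [[d j] a]. reflexivity. Qed.
Lemma JJ_S k : J (S k) = g (D k) (J k).
Proof. unfold DD, JJ. simpl. destruct (st g x0 s k) as [[d j] a]. reflexivity. Qed.
Lemma AA_S k : A (S k) = (A k * Z.of_nat (M k) + 1)%Z.
Proof. unfold MM, AA, DD, JJ. simpl. destruct (st g x0 s k) as [[d j] a]. reflexivity. Qed.

Lemma DD_ge2 k : (2 <= D k)%nat.
Proof.
  induction k. exact HD0.
  rewrite DD_S. unfold MM. pose proof (nat_pow_ge1 (D k) (J (S k)) ltac:(lia)). nia.
Qed.

Lemma JJ_lt k : (J k < J (S k))%nat.
Proof. rewrite JJ_S. apply Hgj. apply DD_ge2. Qed.

Lemma JJ_ge k : (k + J 0 <= J k)%nat.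
Proof. induction k. lia. pose proof (JJ_lt k). lia. Qed.

Lemma JJ_mono k l : (k <= l)%nat -> (J k <= J l)%nat.
Proof. induction 1. lia. pose proof (JJ_lt m). lia. Qed.

Lemma Dr k : 2 <= INR (D k).
Proof. apply (le_INR 2). apply DD_ge2. Qed.

Lemma Mr_lo k : 2 * INR (D k) ^ J (S k) <= INR (M k).
Proof.
  unfold MM. rewrite plus_INR, mult_INR, pow_INR. simpl INR at 1.
  destruct (s k); simpl; lra.
Qed.

Lemma Mr_hi k : INR (M k) <= 2 * INR (D k) ^ J (S k) + 1.
Proof.
  unfold MM. rewrite plus_INR, mult_INR, pow_INR. simpl INR at 1.
  destruct (s k); simpl; lra.
Qed.

Lemma Dpow_ge k : INR (D k) <= INR (D k) ^ J (S k).
Proof.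
  pose proof (Dr k). pose proof (JJ_lt k).
  rewrite <- (pow_1 (INR (D k))) at 1. apply Rle_pow. lra. lia.
Qed.

Lemma Mr_ge4 k : 4 <= INR (M k).
Proof. pose proof (Mr_lo k). pose proof (Dpow_ge k). pose proof (Dr k). lra. Qed.

Lemma DD_Sr k : INR (D (S k)) = INR (D k) * INR (M k).
Proof. rewrite DD_S, mult_INR. reflexivity. Qed.

Lemma SS_S k : S_ (S k) = S_ k + / INR (D (S k)).
Proof.
  unfold SS. rewrite AA_S, DD_Sr. rewrite plus_IZR, mult_IZR, <- INR_IZR_INZ.
  pose proof (Dr k). pose proof (Mr_ge4 k). field. lra.
Qed.

Lemma Phi_step k : S_ (S k) + / INR (D (S k)) <= S_ k + / INR (D k).
Proof.
  rewrite SS_S, DD_Sr. pose proof (Dr k). pose proof (Mr_ge4 k).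
  assert (/ (INR (D k) * INR (M k)) <= / (2 * INR (D k))).
  { apply Rinv_le_contravar. lra.
    assert (0 <= INR (D k) * (INR (M k) - 2)) by (apply Rmult_le_pos; lra). lra. }
  rewrite Rinv_mult in H1 |- *. rewrite Rinv_mult in H1.
  assert (/ 2 * / INR (D k) = / INR (D k) * / 2) by ring. lra.
Qed.

Lemma Phi_mono k l : (k <= l)%nat -> S_ l + / INR (D l) <= S_ k + / INR (D k).
Proof. induction 1. lra. pose proof (Phi_step m). lra. Qed.

Lemma SS_mono k l : (k <= l)%nat -> S_ k <= S_ l.
Proof.
  induction 1. lra. rewrite SS_S. pose proof (Dr (S m)).
  assert (0 < / INR (D (S m))) by (apply Rinv_0_lt_compat; lra). lra.
Qed.

Definition Eset (x : R) : Prop := exists k, x = S_ k.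

Lemma Eset_bound : bound Eset.
Proof.
  exists (S_ 0 + / INR (D 0)). intros x [k ->].
  pose proof (Phi_mono 0 k ltac:(lia)). pose proof (Dr k).
  assert (0 < / INR (D k)) by (apply Rinv_0_lt_compat; lra). lra.
Qed.

Lemma Eset_inh : exists x, Eset x.
Proof. exists (S_ 0). exists 0%nat. reflexivity. Qed.

Definition zeta : R := proj1_sig (completeness Eset Eset_bound Eset_inh).

Lemma zeta_lub : is_lub Eset zeta.
Proof. exact (proj2_sig (completeness Eset Eset_bound Eset_inh)). Qed.

Lemma zeta_ge k : S_ k <= zeta.
Proof. apply (proj1 zeta_lub). exists k. reflexivity. Qed.

Lemma zeta_le k : zeta <= S_ k + / INR (D k).
Proof.
  apply (proj2 zeta_lub). intros x [m ->].
  destruct (le_lt_dec k m) as [H|H].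
  - pose proof (Phi_mono k m H). pose proof (Dr m).
    assert (0 < / INR (D m)) by (apply Rinv_0_lt_compat; lra). lra.
  - pose proof (SS_mono m k ltac:(lia)). pose proof (Dr k).
    assert (0 < / INR (D k)) by (apply Rinv_0_lt_compat; lra). lra.
Qed.

Lemma zeta_frac k : / INR (M k) <= zeta * INR (D k) - IZR (A k) <= 2 / INR (M k).
Proof.
  pose proof (zeta_ge (S k)). pose proof (zeta_le (S k)).
  rewrite SS_S in H, H0. rewrite DD_Sr in H, H0.
  pose proof (Dr k). pose proof (Mr_ge4 k).
  assert (E : S_ k * INR (D k) = IZR (A k)) by (unfold SS; field; lra).
  assert (E2 : / (INR (D k) * INR (M k)) * INR (D k) = / INR (M k)) by (field; lra).
  split.
  - apply Rmult_le_compat_r with (r := INR (D k)) in H; [|lra]. lra.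
  - apply Rmult_le_compat_r with (r := INR (D k)) in H0; [|lra]. lra.
Qed.

Lemma level_bound k N : (N <= J (S k))%nat ->
  0 < dist_nearest_int (zeta * INR (D k)) /\
  dist_nearest_int (zeta * INR (D k)) <= / INR (D k) ^ N.
Proof.
  intros HN. destruct (zeta_frac k) as [H1 H2].
  pose proof (Mr_ge4 k). pose proof (Mr_lo k). pose proof (Dr k).
  assert (0 < / INR (M k)) by (apply Rinv_0_lt_compat; lra).
  assert (2 / INR (M k) <= 1/2).
  { unfold Rdiv. apply Rmult_le_reg_r with (INR (M k)); [lra|].
    rewrite Rmult_assoc, Rinv_l by lra. lra. }
  destruct (dist_between (zeta * INR (D k)) (A k)) as [Hp Hle]. lra.
  split; auto.
  assert (HP : 0 < INR (D k) ^ J (S k)) by (apply pow_lt; lra).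
  assert (2 / INR (M k) <= / INR (D k) ^ J (S k)).
  { assert (/ INR (M k) <= / (2 * INR (D k) ^ J (S k))) by (apply Rinv_le_contravar; lra).
    match goal with Hh : / INR (M k) <= / (2 * _) |- _ => rewrite Rinv_mult in Hh end. unfold Rdiv. lra. }
  pose proof (inv_pow_le (INR (D k)) N (J (S k)) ltac:(lra) HN). lra.
Qed.

Lemma level_good phi k N : (N <= J (S k))%nat -> INR (D k) <= phi (INR N) -> good_at phi zeta N.
Proof.
  intros HN Hphi. destruct (level_bound k N HN).
  apply (good_of_bound phi zeta N (D k)); auto. apply DD_ge2.
Qed.

Lemma frac_pow k : 2 / INR (M k) <= / INR (D k) ^ J (S k).
Proof.
  pose proof (Mr_ge4 k). pose proof (Mr_lo k). pose proof (Dr k).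
  assert (HP : 0 < INR (D k) ^ J (S k)) by (apply pow_lt; lra).
  assert (Hh : / INR (M k) <= / (2 * INR (D k) ^ J (S k))) by (apply Rinv_le_contravar; lra).
  rewrite Rinv_mult in Hh. unfold Rdiv. lra.
Qed.

Lemma approx k : 0 <= zeta - S_ k <= / INR (D k) ^ S (J (S k)).
Proof.
  destruct (zeta_frac k) as [H1 H2]. pose proof (frac_pow k).
  pose proof (Dr k). pose proof (Mr_ge4 k).
  assert (0 < / INR (M k)) by (apply Rinv_0_lt_compat; lra).
  assert (E : zeta - S_ k = (zeta * INR (D k) - IZR (A k)) * / INR (D k)) by (unfold SS; field; lra).
  rewrite E. simpl pow. rewrite Rinv_mult.
  assert (0 < / INR (D k)) by (apply Rinv_0_lt_compat; lra).
  split. apply Rmult_le_pos; lra.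
  rewrite (Rmult_comm (/ INR (D k))). apply Rmult_le_compat_r; lra.
Qed.

Lemma SS_lt k l : (k < l)%nat -> S_ k < S_ l.
Proof.
  intros H. pose proof (SS_mono (S k) l H). rewrite SS_S in H0.
  pose proof (Dr (S k)). assert (0 < / INR (D (S k))) by (apply Rinv_0_lt_compat; lra). lra.
Qed.

Lemma SS_inj i j : S_ i = S_ j -> i = j.
Proof.
  intros E. destruct (lt_eq_lt_dec i j) as [[H|H]|H]; auto.
  - apply SS_lt in H. lra.
  - apply SS_lt in H. lra.
Qed.

Lemma DD_ge k : INR k <= INR (D k).
Proof.
  induction k. simpl. pose proof (Dr 0). lra.
  rewrite S_INR, DD_Sr. pose proof (Dr k). pose proof (Mr_ge4 k). nra.
Qed.

Lemma zeta_irr : irrational zeta.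
Proof.
  intros p q Hq E.
  set (k := S (Z.abs_nat q)).
  destruct (zeta_frac k) as [H1 H2]. pose proof (frac_pow k).
  pose proof (Dr k). pose proof (Mr_ge4 k). pose proof (Mr_lo k). pose proof (Dpow_ge k).
  pose proof (DD_ge k).
  assert (Hk : INR k = Rabs (IZR q) + 1).
  { unfold k. rewrite S_INR, <- abs_IZR, INR_IZR_INZ. f_equal. f_equal. lia. }
  set (x := zeta * INR (D k) - IZR (A k)) in *.
  assert (Hx : 0 < x) by (assert (0 < / INR (M k)) by (apply Rinv_0_lt_compat; lra); lra).
  assert (Hq' : IZR q <> 0) by (apply not_0_IZR; auto).
  assert (En : IZR (p * Z.of_nat (D k) - q * A k) = IZR q * x).
  { rewrite minus_IZR, !mult_IZR, <- INR_IZR_INZ. unfold x. rewrite E. field. auto. }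
  assert (Hsmall : Rabs (IZR q * x) < 1).
  { rewrite Rabs_mult, (Rabs_right x) by lra.
    assert (x <= 2 / INR (M k)) by lra.
    assert (2 / INR (M k) * INR (M k) = 2) by (field; lra).
    assert (Rabs (IZR q) * x * INR (M k) <= Rabs (IZR q) * 2).
    { pose proof (Rabs_pos (IZR q)).
      assert (x * INR (M k) <= 2) by (apply Rmult_le_reg_r with (/ INR (M k)); [apply Rinv_0_lt_compat; lra|];
         field_simplify; lra).
      nra. }
    pose proof (Rabs_pos (IZR q)).
    assert (INR (M k) > 2 * Rabs (IZR q)) by lra.
    nra. }
  rewrite <- En in Hsmall. apply IZR_abs_lt1 in Hsmall. rewrite Hsmall in En.
  assert (IZR q * x <> 0) by (apply Rmult_integral_contrapositive; split; lra).
  simpl in En. lra.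
Qed.

Lemma zeta_liouville : Liouville zeta.
Proof.
  split. apply zeta_irr.
  intros eta Heta l.
  destruct (archimed eta) as [Hup _].
  set (K := Z.to_nat (up eta)).
  assert (HK : eta < INR K).
  { unfold K. rewrite INR_IZR_INZ, Z2Nat.id. lra. apply le_IZR. lra. }
  destruct (list_avoid S_ SS_inj l K) as [k [Hk Hn]].
  exists (S_ k). split; auto.
  exists (A k), (D k). split. pose proof (DD_ge2 k). lia.
  split. reflexivity.
  destruct (approx k) as [H1 H2]. fold (S_ k). unfold SS in H1, H2 |- *.
  rewrite Rabs_right by lra.
  eapply Rle_trans. apply H2.
  pose proof (Dr k).
  rewrite Rpower_Ropp, <- Rpower_pow by lra.
  apply Rinv_le_contravar. apply exp_pos.
  apply Rle_Rpower. lra.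
  pose proof (JJ_ge (S k)). apply le_INR in H0. apply le_INR in Hk.
  rewrite plus_INR in H0. rewrite S_INR. pose proof (pos_INR (J 0)). rewrite S_INR in H0. lra.
Qed.

End Cons.

Section Inj.
Variable g : nat -> nat -> nat.
Hypothesis Hgj : forall d j, (2 <= d)%nat -> (j < g d j)%nat.
Variable x0 : nat * nat * Z.
Hypothesis HD0 : (2 <= fst (fst x0))%nat.

Lemma key_ineq s t k : st g x0 s k = st g x0 t k -> s k = false -> t k = true ->
  zeta g Hgj x0 HD0 t < zeta g Hgj x0 HD0 s.
Proof.
  intros Est Hs Ht.
  assert (ED : DD g x0 s k = DD g x0 t k) by (unfold DD; rewrite Est; auto).
  assert (EJ : JJ g x0 s k = JJ g x0 t k) by (unfold JJ; rewrite Est; auto).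
  assert (EA : SS g x0 s k = SS g x0 t k) by (unfold SS, AA, DD; rewrite Est; auto).
  assert (EJ' : JJ g x0 s (S k) = JJ g x0 t (S k)) by (rewrite !JJ_S, ED, EJ; auto).
  assert (EM : INR (MM g x0 t k) = INR (MM g x0 s k) + 1).
  { unfold MM. rewrite Hs, Ht, EJ', ED. rewrite !plus_INR. simpl. lra. }
  pose proof (zeta_ge g Hgj x0 HD0 s (S k)) as Hzs.
  pose proof (zeta_le g Hgj x0 HD0 t (S (S k))) as Hzt.
  rewrite (SS_S g Hgj x0 HD0 s) in Hzs. rewrite (SS_S g Hgj x0 HD0 t), (SS_S g Hgj x0 HD0 t) in Hzt.
  rewrite EA in Hzs.
  rewrite (DD_Sr g x0 s) in Hzs. rewrite (DD_Sr g x0 t (S k)) in Hzt.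
  pose proof (Dr g x0 HD0 t k) as HD.
  pose proof (Mr_ge4 g Hgj x0 HD0 s k) as HMs.
  pose proof (Mr_lo g x0 t (S k)) as HMt.
  pose proof (Dpow_ge g Hgj x0 HD0 t (S k)) as HP.
  rewrite ED in Hzs. rewrite (DD_Sr g x0 t k) in Hzt, HMt, HP.
  rewrite EM in Hzt, HMt, HP.
  set (d := INR (DD g x0 t k)) in *. set (m := INR (MM g x0 s k)) in *.
  set (E := d * (m + 1)) in *.
  set (N := INR (MM g x0 t (S k))) in *.
  assert (HE0 : 0 < E) by (unfold E; nra).
  assert (HN : 2 * E <= N) by lra.
  assert (H1 : / (E * N) <= / (E * (2 * E))).
  { apply Rinv_le_contravar. nra. apply Rmult_le_compat_l; lra. }
  assert (H2 : / E + 2 * / (E * (2 * E)) < / (d * m)).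
  { assert (Hdiff : / (d * m) - / E - 2 * / (E * (2 * E)) =
       (d * (E - m)) / (d * m * E * E)).
    { assert (d <> 0) by lra. assert (m <> 0) by lra. assert (m + 1 <> 0) by lra. unfold E. field. auto. }
    assert (0 < (d * (E - m)) / (d * m * E * E)).
    { apply Rdiv_lt_0_compat. unfold E. apply Rmult_lt_0_compat. lra. nra. assert (0 < d * m) by nra. 
      assert (0 < d * m * E) by nra. nra. }
    lra. }
  lra.
Qed.

Lemma zeta_inj s t : zeta g Hgj x0 HD0 s = zeta g Hgj x0 HD0 t -> s = t.
Proof.
  intros Ez.
  assert (H : forall k, st g x0 s k = st g x0 t k /\ s k = t k).
  { induction k.
    - assert (E0 : st g x0 s 0 = st g x0 t 0) by reflexivity.
      split; auto.
      destruct (s 0%nat) eqn:Hs, (t 0%nat) eqn:Ht; auto.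
      + pose proof (key_ineq t s 0 (eq_sym E0) Ht Hs). lra.
      + pose proof (key_ineq s t 0 E0 Hs Ht). lra.
    - destruct IHk as [E1 E2].
      assert (E0 : st g x0 s (S k) = st g x0 t (S k)) by (simpl; rewrite E1, E2; auto).
      split; auto.
      destruct (s (S k)) eqn:Hs, (t (S k)) eqn:Ht; auto.
      + pose proof (key_ineq t s (S k) (eq_sym E0) Ht Hs). lra.
      + pose proof (key_ineq s t (S k) E0 Hs Ht). lra. }
  apply functional_extensionality. intros k. apply H.
Qed.

End Inj.

Lemma cantor (F : (nat -> bool) -> nat) : ~ (forall s t, F s = F t -> s = t).
Proof.
  intros Hinj.
  set (h := fun n => epsilon (inhabits (fun _ : nat => false)) (fun s => F s = n)).
  set (dg := fun n => negb (h n n)).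
  assert (E : h (F dg) = dg).
  { apply Hinj. unfold h. apply (epsilon_spec (inhabits (fun _ : nat => false)) (fun s => F s = F dg)).
    exists dg. reflexivity. }
  assert (E2 : dg (F dg) = negb (h (F dg) (F dg))) by reflexivity.
  rewrite E in E2. destruct (dg (F dg)); discriminate.
Qed.

Lemma uncount_of (P : R -> Prop) (Zf : (nat -> bool) -> R) :
  (forall s, P (Zf s)) -> (forall s t, Zf s = Zf t -> s = t) -> uncountable P.
Proof.
  intros HP Hi [f Hf]. apply (cantor (fun s => f (Zf s))).
  intros s t E. apply Hi. apply Hf; auto.
Qed.

Lemma cover (f : nat -> nat) : (forall k, (f k < f (S k))%nat) ->
  forall N, (f 0 <= N)%nat -> exists k, (f k <= N < f (S k))%nat.
Proof.
  intros Hf N. induction N; intros HN.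
  - exists 0%nat. specialize (Hf 0%nat). lia.
  - destruct (Nat.eq_dec (f 0%nat) (S N)) as [E|E].
    + exists 0%nat. specialize (Hf 0%nat). lia.
    + destruct (IHN ltac:(lia)) as [k Hk].
      destruct (Nat.eq_dec (S N) (f (S k))) as [E2|E2].
      * exists (S k). specialize (Hf (S k)). lia.
      * exists k. lia.
Qed.

Lemma Rbar_interval (a b : Rbar) : Rbar_lt a b -> exists x y, x < y /\
  (forall w, x <= w -> Rbar_lt a (Finite w)) /\ (forall w, w <= y -> Rbar_lt (Finite w) b).
Proof.
  destruct a as [ra| |], b as [rb| |]; simpl; intros H; try contradiction.
  - exists ((2*ra+rb)/3), ((ra+2*rb)/3). repeat split; intros; simpl; lra.
  - exists (ra + 1), (ra + 2). repeat split; intros; simpl; lra.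
  - exists (rb - 2), (rb - 1). repeat split; intros; simpl; try lra; auto.
  - exists 0, 1. repeat split; intros; simpl; try lra; auto.
Qed.

Lemma DDphi phi g (Hgj : forall d j, (2 <= d)%nat -> (j < g d j)%nat)
  (Hgphi : forall d j, (2 <= d)%nat -> INR d * (2 * INR d ^ g d j + 1) <= phi (INR (g d j)))
  x0 (HD0 : (2 <= fst (fst x0))%nat) s k :
  INR (DD g x0 s (S k)) <= phi (INR (JJ g x0 s (S k))).
Proof.
  rewrite DD_Sr. pose proof (Mr_hi g x0 s k). pose proof (Dr g x0 HD0 s k).
  rewrite (JJ_S g x0 s k) in H |- *.
  eapply Rle_trans; [|apply Hgphi; apply (DD_ge2 g x0 HD0)].
  apply Rmult_le_compat_l; lra.
Qed.

Theorem proposition3p6 (phi : R -> R) :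
  in_Phi phi ->
  (exists z, L_phi phi z) ->
  uncountable (L_phi phi) /\
  (forall a b : Rbar, Rbar_lt a b ->
     uncountable (fun z => L_phi_star phi z /\ Rbar_lt a (Finite z) /\ Rbar_lt (Finite z) b)).
Proof.
  intros Hphi [z [[Hirr Hliou] Hgood]].
  destruct Hphi as [Hphi2 [Hmono _]].
  assert (Hex : forall N, exists qp : nat * Z, (1 <= N)%nat ->
     (2 <= fst qp)%nat /\ INR (fst qp) <= phi (INR N) /\
     Rabs (z * INR (fst qp) - IZR (snd qp)) <= / INR (fst qp) ^ N).
  { intros N. destruct (le_lt_dec 1 N) as [l|l].
    - destruct (bound_of_good phi z N (Hgood N l)) as [q [H1 [H2 [p H3]]]].
      exists (q, p). intros _. simpl. auto.
    - exists (0%nat, 0%Z). intros; lia. }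
  destruct (my_choice _ Hex) as [f Hf].
  set (qf := fun N => fst (f N)). set (pf := fun N => snd (f N)).
  assert (Hq : forall N, (1 <= N)%nat -> (2 <= qf N)%nat /\ INR (qf N) <= phi (INR N) /\
     Rabs (z * INR (qf N) - IZR (pf N)) <= / INR (qf N) ^ N) by (intros N HN; apply Hf; auto).
  assert (Hex2 : forall d, exists h : nat -> nat, forall j, (2 <= d)%nat ->
     (j < h j)%nat /\ INR d * (2 * INR d ^ h j + 1) <= phi (INR (h j))).
  { intros d. apply (my_choice (fun j L => (2 <= d)%nat -> (j < L)%nat /\ INR d * (2 * INR d ^ L + 1) <= phi (INR L))). intros j. destruct (le_lt_dec 2 d) as [l|l].
    - destruct (G4 phi z Hirr qf pf Hq d j l) as [L HL]. exists L. auto.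
    - exists 0%nat. intros; lia. }
  destruct (my_choice _ Hex2) as [G HG].
  set (g := fun d j => G d j).
  assert (Hgj : forall d j, (2 <= d)%nat -> (j < g d j)%nat) by (intros d j Hd; apply (HG d j Hd)).
  assert (Hgphi : forall d j, (2 <= d)%nat -> INR d * (2 * INR d ^ g d j + 1) <= phi (INR (g d j)))
    by (intros d j Hd; apply (HG d j Hd)).
  assert (Hup : forall x0 (HD0 : (2 <= fst (fst x0))%nat) s k N,
     (JJ g x0 s (S k) <= N)%nat -> snd (fst x0) = 1%nat ->
     INR (DD g x0 s (S k)) <= phi (INR N)).
  { intros x0 HD0 s k N HN HJ0.
    eapply Rle_trans. apply (DDphi phi g Hgj Hgphi x0 HD0 s k).
    apply Hmono. pose proof (JJ_ge g Hgj x0 HD0 s (S k)).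
    assert (E0 : JJ g x0 s 0 = 1%nat) by (unfold JJ; simpl; auto). rewrite E0 in H.
    apply (le_INR 2). lia. apply le_INR; auto. }
  split.
  - set (x0 := (2%nat, 1%nat, 0%Z)).
    assert (HD0 : (2 <= fst (fst x0))%nat) by (simpl; lia).
    apply (uncount_of _ (zeta g Hgj x0 HD0)); [|apply zeta_inj].
    intros s. split. apply zeta_liouville.
    intros N HN.
    destruct (cover (JJ g x0 s) (JJ_lt g Hgj x0 HD0 s) N HN) as [k [Hk1 Hk2]].
    apply (level_good g Hgj x0 HD0 s phi k N); [lia|].
    destruct k as [|k].
    + unfold DD. change (fst (fst (st g x0 s 0))) with 2%nat. destruct (Nat.eq_dec N 1) as [E|E].
      * subst N. destruct (Hq 1%nat ltac:(lia)) as [H1 [H2 _]].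
        apply (le_INR 2) in H1. eapply Rle_trans; [apply H1|apply H2].
      * apply Hphi2. apply (le_INR 2). lia.
    + apply Hup; auto. 
  - intros a b Hab.
    destruct (Rbar_interval a b Hab) as [x [y [Hxy [Ha Hb]]]].
    set (del := y - x).
    assert (Hdel : 0 < del) by (unfold del; lra).
    destruct (archimed (3 / del)) as [Hu1 Hu2].
    assert (Hpos : 0 < 3 / del) by (apply Rdiv_lt_0_compat; lra).
    set (D0 := (Z.to_nat (up (3 / del)) + 2)%nat).
    assert (HD0r : 3 / del < INR D0).
    { unfold D0. rewrite plus_INR, INR_IZR_INZ, Z2Nat.id. simpl. lra.
      apply le_IZR. lra. }
    set (A0 := up (x * INR D0)).
    destruct (archimed (x * INR D0)) as [Ha1 Ha2]. fold A0 in Ha1, Ha2.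
    set (x0 := (D0, 1%nat, A0)).
    assert (HD0 : (2 <= fst (fst x0))%nat) by (simpl; unfold D0; lia).
    apply (uncount_of _ (zeta g Hgj x0 HD0)); [|apply zeta_inj].
    intros s. split; [split|split].
    + apply zeta_liouville.
    + exists (JJ g x0 s 1). intros N HN1 HN.
      assert (HJ0 : (JJ g x0 s 0 <= N)%nat) by (pose proof (JJ_lt g Hgj x0 HD0 s 0); lia).
      destruct (cover (JJ g x0 s) (JJ_lt g Hgj x0 HD0 s) N HJ0) as [k [Hk1 Hk2]].
      apply (level_good g Hgj x0 HD0 s phi k N); [lia|].
      destruct k as [|k]. lia.
      apply Hup; auto.
    + apply Ha.
      pose proof (SS_lt g Hgj x0 HD0 s 0 1 ltac:(lia)).
      pose proof (zeta_ge g Hgj x0 HD0 s 1).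
      assert (E : SS g x0 s 0 = IZR A0 / INR D0) by reflexivity.
      assert (HD0p : 0 < INR D0) by (apply (lt_INR 0); unfold D0; lia).
      assert (x < IZR A0 / INR D0).
      { apply Rmult_lt_reg_r with (INR D0); auto. unfold Rdiv. rewrite Rmult_assoc, Rinv_l by lra. lra. }
      lra.
    + apply Hb.
      pose proof (zeta_le g Hgj x0 HD0 s 0).
      assert (E : SS g x0 s 0 = IZR A0 / INR D0) by reflexivity.
      assert (E2 : DD g x0 s 0 = D0) by reflexivity.
      rewrite E, E2 in H.
      assert (HD0p : 0 < INR D0) by (apply (lt_INR 0); unfold D0; lia).
      assert (IZR A0 / INR D0 + / INR D0 <= y).
      { apply Rmult_le_reg_r with (INR D0); auto.
        replace ((IZR A0 / INR D0 + / INR D0) * INR D0) with (IZR A0 + 1) by (field; lra).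
        assert (3 < del * INR D0).
        { apply Rmult_lt_compat_r with (r := del) in HD0r; auto.
          unfold Rdiv in HD0r. rewrite Rmult_assoc, Rinv_l in HD0r by lra. lra. }
        unfold del in *. nra. }
      lra.
Qed.
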